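(* For any prime $p>3$, $$\sum_{k=1}^{p-1}\frac{\binom{2k}{k}}{k3^k}\equiv\frac{3^{p-1}-1}{p}\pmod p.$$
   Context: Congruences between rational numbers whose denominators are coprime to $p$ are understood in the ring of rationals with denominators prime to $p$ (i.e. $p$-adic integers). *)

(* Defs.v *)
From mathcomp Require Import all_boot all_order all_algebra.
Set Implicit Arguments. Unset Strict Implicit. Unset Printing Implicit Defensive.
Import Order.TTheory GRing.Theory Num.Theory.
Local Open Scope ring_scope.

(* Congruence of rationals modulo a prime p, in Z_(p) (rationals with
   denominator prime to p): x = y (mod p) iff x - y = a/b with p | a, p \nmid b.
   Since numq/denq are coprime, this is exactly p | numq (x - y). *)
Definition rat_congr (p : nat) (x y : rat) : Prop :=
  (p%:Z %| numq (x - y))%Z.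

(* Main.v *)
Require Import Defs.
From mathcomp Require Import all_boot all_order all_algebra.
From mathcomp Require Import ring lra zify.
Set Implicit Arguments. Unset Strict Implicit. Unset Printing Implicit Defensive.
Import Order.TTheory GRing.Theory Num.Theory.
Local Open Scope ring_scope.

Section Phi.
Variable p : nat.
Hypothesis hp : prime p.
Local Notation F := 'F_p.

Definition phi (x : rat) : F := (numq x)%:~R / (denq x)%:~R.
Definition pint (x : rat) : bool := ~~ (p %| `|denq x|)%N.

Lemma natF0 (n : nat) : (n%:R == 0 :> F) = (p %| n)%N.
Proof. by rewrite (dvdn_pcharf (pchar_Fp hp)). Qed.

Lemma intF0 (z : int) : (z%:~R == 0 :> F) = (p %| `|z|)%N.
Proof.
case: z => n /=; first by rewrite -natF0.
by rewrite NegzE mulrNz oppr_eq0 -natF0.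
Qed.

Lemma frac (a b : int) : ~~ (p %| `|b|)%N ->
  pint (a%:~R / b%:~R) /\ phi (a%:~R / b%:~R) = a%:~R / b%:~R.
Proof.
move=> hb; set x := a%:~R / b%:~R.
have b0 : b != 0 by apply: contraNneq hb => ->; rewrite dvdn0.
have e : numq x * b = a * denq x.
  apply/eqP; rewrite -(eqr_int rat) !intrM numqE /x.
  by apply/eqP; field; rewrite intr_eq0.
have pd : pint x.
  apply/negP => hd.
  have : (p %| `|numq x| * `|b|)%N by rewrite -abszM e abszM dvdn_mull.
  rewrite Euclid_dvdM // (negPf hb) orbF => hn.
  have := coprime_num_den x; rewrite /coprime => /eqP g.
  have : (p %| gcdn `|numq x| `|denq x|)%N by rewrite dvdn_gcd hn.
  by rewrite g dvdn1 => /eqP p1; move: (hp); rewrite p1.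
split=> //; rewrite /phi; apply/eqP; rewrite eqr_div ?intF0 //.
by rewrite -!intrM e.
Qed.

Lemma pintF0 x : pint x -> ((denq x)%:~R : F) != 0.
Proof. by rewrite intF0. Qed.

Lemma pint_mul (a b : int) : ~~ (p %| `|a|)%N -> ~~ (p %| `|b|)%N -> ~~ (p %| `|(a * b)%R|)%N.
Proof. by move=> ha hb; rewrite abszM Euclid_dvdM // negb_or ha hb. Qed.

Lemma phiD x y : pint x -> pint y -> pint (x + y) /\ phi (x + y) = phi x + phi y.
Proof.
move=> hx hy.
have -> : x + y = (numq x * denq y + numq y * denq x)%:~R / (denq x * denq y)%:~R.
  rewrite rmorphD !rmorphM /= -{1}(divq_num_den x) -{1}(divq_num_den y).
  by field; rewrite !intr_eq0 !denq_neq0.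
have [-> ->] := frac (numq x * denq y + numq y * denq x) (pint_mul hx hy).
split=> //; rewrite /phi rmorphD !rmorphM /=.
by field; rewrite !pintF0.
Qed.

Lemma phiM x y : pint x -> pint y -> pint (x * y) /\ phi (x * y) = phi x * phi y.
Proof.
move=> hx hy.
have -> : x * y = (numq x * numq y)%:~R / (denq x * denq y)%:~R.
  rewrite !rmorphM /= -{1}(divq_num_den x) -{1}(divq_num_den y).
  by field; rewrite !intr_eq0 !denq_neq0.
have [-> ->] := frac (numq x * numq y) (pint_mul hx hy).
split=> //; rewrite /phi !rmorphM /=.
by field; rewrite !pintF0.
Qed.

Lemma phiN x : pint x -> pint (- x) /\ phi (- x) = - phi x.
Proof. by move=> hx; rewrite /pint /phi numqN denqN rmorphN /= mulNr. Qed.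

Lemma phiZ (z : int) : pint z%:~R /\ phi z%:~R = z%:~R.
Proof.
have h1 : ~~ (p %| `|(1:int)|)%N.
  by rewrite dvdn1; apply/eqP => p1; move: (hp); rewrite p1.
by have := frac z h1; rewrite !mulr1z !divr1.
Qed.

Lemma phin (n : nat) : pint n%:R /\ phi n%:R = n%:R.
Proof. exact: (phiZ n). Qed.

Lemma phiX x n : pint x -> pint (x ^+ n) /\ phi (x ^+ n) = phi x ^+ n.
Proof.
move=> hx; elim: n => [|n [h1 h2]]; first by rewrite !expr0; exact: (phin 1).
by rewrite !exprS; have [-> ->] := phiM hx h1; rewrite h2.
Qed.

Lemma phiS (r : seq nat) (f : nat -> rat) : (forall i, i \in r -> pint (f i)) ->
  pint (\sum_(i <- r) f i) /\ phi (\sum_(i <- r) f i) = \sum_(i <- r) phi (f i).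
Proof.
elim: r => [|a r IH] h; first by rewrite !big_nil; exact: (phin 0).
rewrite !big_cons.
have [h1 h2] := IH (fun i hi => h i (mem_behead (s := a :: r) hi)).
have [-> ->] := phiD (h a (mem_head a r)) h1.
by rewrite h2.
Qed.

Lemma phi_div (a b : nat) : ~~ (p %| b)%N ->
  pint (a%:R / b%:R) /\ phi (a%:R / b%:R) = a%:R / b%:R.
Proof. move=> hb; exact: (frac a (b := b)). Qed.

Lemma phi_congr x y : pint x -> pint y -> phi x = phi y ->
  (p%:Z %| numq (x - y))%Z.
Proof.
move=> hx hy e.
have [h1 h2] := phiD hx (proj1 (phiN hy)).
rewrite (proj2 (phiN hy)) e subrr in h2.
move: h2; rewrite /phi => /eqP; rewrite mulf_eq0 invr_eq0 (negPf (pintF0 h1)) orbF.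
by rewrite intF0 dvdzE.
Qed.

Lemma pm1F : (p.-1%:R : F) = -1.
Proof.
have p0 : (0 < p)%N by exact: prime_gt0.
apply/eqP; rewrite -subr_eq0 opprK -(natrD F p.-1 1) addn1 prednK //.
by rewrite pchar_Fp_0.
Qed.

Lemma binF a b : (a < p)%N -> (b < p)%N ->
  ('C(p.-1 - a, b)%:R : F) = (-1) ^+ b * ('C(a + b, b))%:R.
Proof.
move=> ha; elim: b => [|b IH] hb; first by rewrite !bin0 expr0 mul1r.
have IH' := IH (ltnW hb).
have nz : (b.+1%:R : F) != 0.
  rewrite natF0; apply/negP => /(dvdn_leq (ltn0Sn _)); rewrite leqNgt hb //.
apply: (mulfI nz); rewrite -natrM mul_bin_left.
have -> : ((p.-1 - a - b) * 'C(p.-1 - a, b))%:R = - (a + b).+1%:R * ('C(p.-1 - a, b)%:R : F).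
  case: (leqP b (p.-1 - a)) => hbN.
    rewrite natrM; congr (_ * _).
    have e : (p.-1 - a - b + (a + b).+1 = p.-1 + 1)%N by lia.
    apply/eqP; rewrite -subr_eq0 opprK -natrD e natrD pm1F addNr //.
  by rewrite bin_small // muln0 mulr0.
rewrite IH'.
have e : ((a + b).+1 * 'C(a + b, b) = b.+1 * 'C(a + b.+1, b.+1))%N.
  by rewrite -mul_bin_diag /= addnS.
have eF := congr1 (fun n => n%:R : F) e; rewrite /= !natrM in eF.
by rewrite mulNr mulrCA eF exprS mulN1r mulNr mulrN mulrCA.
Qed.
End Phi.

Definition t (n k : nat) : rat := (-1) ^+ k * ('C(n - k, k))%:R * 3 ^+ (n - k).
Definition U (n : nat) : rat := \sum_(k < n.+1) t n k.

Lemma t_big n k : (n < k)%N -> t n k = 0.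
Proof.
move=> h; rewrite /t (_ : (n - k = 0)%N); last by lia.
by rewrite bin0n (_ : (k == 0) = false) ?mulr0 ?mul0r //; case: k h.
Qed.

Lemma Uext n d : U n = \sum_(k < (n.+1 + d)%N) t n k.
Proof.
elim: d => [|d IH]; first by rewrite addn0.
by rewrite addnS big_ord_recr /= t_big ?addr0 //; lia.
Qed.

Lemma t_rec n k : t n.+2 k.+1 = 3 * t n.+1 k.+1 - 3 * t n k.
Proof.
rewrite /t (subSS k n.+1) (subSS k n).
case: (leqP k n) => hk.
  rewrite (subSn hk) binS natrD (exprS 3 (n - k)) (exprS (-1) k).
  move: (3 ^+ (n - k)) ((-1) ^+ k) ('C(n - k, k.+1)%:R) ('C(n - k, k)%:R) => a b c d.
  ring.
rewrite (_ : (n - k = 0)%N); last by lia.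
rewrite (_ : (n.+1 - k = 0)%N); last by lia.
rewrite !bin0n (_ : (k == 0) = false); last by case: k hk.
by rewrite !mulr0 !mul0r subr0.
Qed.


Lemma Urec n : U n.+2 = 3 * U n.+1 - 3 * U n.
Proof.
rewrite (Uext n 1) (Uext n.+1 1) !addn1 /U [in LHS]big_ord_recl [in X in _ = 3 * X - _]big_ord_recl.
under eq_bigr do rewrite t_rec.
rewrite sumrB -!mulr_sumr mulrDr addrA.
congr (_ + _ - _).
  by rewrite /t !subn0 !bin0 !expr0 !mul1r; exact: exprS.
Qed.

Lemma U0 : U 0 = 1.
Proof. by rewrite /U big_ord_recr big_ord0 /t /= add0r !mul1r. Qed.
Lemma U1 : U 1 = 3.
Proof.
rewrite /U !big_ord_recr big_ord0 /t /= subn0 subnn bin0 bin0n expr0 !expr1 !mul1r.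
by rewrite mulr0 mul0r addr0 add0r.
Qed.


Lemma U2 : U 2 = 6. Proof. rewrite Urec U1 U0; lra. Qed.
Lemma U3 : U 3 = 9. Proof. rewrite Urec U2 U1; lra. Qed.
Lemma U4 : U 4 = 9. Proof. rewrite Urec U3 U2; lra. Qed.
Lemma U5 : U 5 = 0. Proof. rewrite Urec U4 U3; lra. Qed.
Lemma U6' : U 6 = -27. Proof. rewrite Urec U5 U4; lra. Qed.
Lemma U7 : U 7 = -81. Proof. rewrite Urec U6' U5; lra. Qed.

Lemma U6 n : U (n + 6) = -27 * U n /\ U (n + 7) = -27 * U n.+1.
Proof.
elim: n => [|n [IH1 IH2]].
  rewrite !add0n U6' U7 U0 U1; split; lra.
split.
  rewrite (_ : (n.+1 + 6 = n + 7)%N) ?IH2 //; lia.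
rewrite (_ : (n.+1 + 7 = (n + 6).+2)%N); last by lia.
rewrite Urec (_ : ((n + 6).+1 = n + 7)%N); last by lia.
rewrite IH2 IH1 Urec; lra.
Qed.

Lemma U6j j r : U (6 * j + r) = (-27) ^+ j * U r.
Proof.
elim: j => [|j IH]; first by rewrite muln0 add0n expr0 mul1r.
rewrite (_ : (6 * j.+1 + r = (6 * j + r) + 6)%N); last by lia.
by rewrite (proj1 (U6 _)) IH exprS mulrA.
Qed.

Definition X (n : nat) : rat :=
  \sum_(1 <= k < n) (-1) ^+ k * ('C(n.-1 - k, k.-1)%:R / k%:R) * 3 ^+ (n - k).

Lemma UX m : U m.+2 - 3 * U m - 3 ^+ m.+2 = m.+2%:R * X m.+2.
Proof.
rewrite /U big_ord_recl big_ord_recr /= /bump /=.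
have -> : t m.+2 m.+2 = 0 by rewrite /t subnn bin0n mulr0 mul0r.
have -> : t m.+2 0 = 3 ^+ m.+2 by rewrite /t subn0 bin0 expr0 !mul1r.
rewrite addr0.
have E : forall a S T : rat, a + S - T - a = S - T by move=> *; ring.
rewrite E /X big_add1 /= big_mkord !mulr_sumr -sumrB.
apply: eq_bigr => i _.
have hi : (i <= m)%N by rewrite -ltnS.
rewrite /t /= !subSS subSn //.
have e : (i.+1 * 'C((m - i).+1, i.+1) = (m - i).+1 * 'C(m - i, i))%N.
  by rewrite -mul_bin_diag.
have hc : ('C((m - i).+1, i.+1)%:R : rat) = ((m - i).+1)%:R * 'C(m - i, i)%:R / (i.+1)%:R.
  have hB : (i.+1%:R : rat) != 0 by rewrite pnatr_eq0.
  by apply: (mulIf hB); rewrite divfK // -!natrM mulnC e.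
rewrite hc add1n (exprS 3 (m - i)) (exprS (-1) i) -!natr1 natrB //.
have hB : (i%:R + 1 : rat) != 0 by rewrite natr1 pnatr_eq0.
move: (3 ^+ (m - i)) ((-1) ^+ i) ('C(m - i, i)%:R) hB => a b c hB.
by field.
Qed.

Lemma phiS' (p : nat) (hp : prime p) (r : seq nat) (f : nat -> rat) (g : nat -> 'F_p) :
  (forall i, i \in r -> pint p (f i) /\ phi p (f i) = g i) ->
  pint p (\sum_(i <- r) f i) /\ phi p (\sum_(i <- r) f i) = \sum_(i <- r) g i.
Proof.
move=> h; have [h1 h2] := phiS hp (fun i hi => proj1 (h i hi)).
split=> //; rewrite h2; apply: eq_big_seq => i hi; exact: proj2 (h i hi).
Qed.

Lemma phi3X (p : nat) (hp : prime p) n : pint p (3 ^+ n) /\ phi p (3 ^+ n) = 3 ^+ n.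
Proof. have [h1 h2] := phin hp 3; have [-> ->] := @phiX p hp _ n h1; by rewrite h2. Qed.

Lemma phisX (p : nat) (hp : prime p) n : pint p ((-1) ^+ n) /\ phi p ((-1) ^+ n) = (-1) ^+ n.
Proof.
have [h1 h2] := phin hp 1; have [h3 h4] := phiN h1.
have [-> ->] := @phiX p hp _ n h3; by rewrite h4 h2.
Qed.

Lemma expr_odd2 (R : pzRingType) (x : R) h : x ^+ h.*2.+1 = x * (x ^+ h) ^+ 2.
Proof. by rewrite exprS -mul2n mulnC exprM. Qed.

Theorem lemma2p4 (p : nat) (hp : prime p) (hp3 : (3 < p)%N) :
  rat_congr p
    (\sum_(1 <= k < p) ('C(2 * k, k))%:R / (k%:R * 3%:R ^+ k) : rat)
    ((3%:R ^+ (p - 1) - 1) / p%:R).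
Proof.
rewrite /rat_congr.
have n2 : ~~ (2 %| p)%N by rewrite dvdn_prime2 //; apply/eqP => e; rewrite -e in hp3.
have n3 : ~~ (3 %| p)%N by rewrite dvdn_prime2 //; apply/eqP => e; rewrite -e in hp3.
have p3 : ~~ (p %| 3)%N by apply/negP => /(dvdn_leq (ltn0Sn 2)); rewrite leqNgt hp3.
set h := p./2.
have ph : p = h.*2.+1 by rewrite /h; move: n2; rewrite dvdn2 negbK => o; lia.
have [e He] : exists e, U p - 3 * U (p - 2) = (-1) ^+ e * 3 ^+ h.+1.
  have m27 : (-27 : rat) = (-1) * 3 ^+ 3 by rewrite !exprS expr0 mulr1; lra.
  have [j [pj|pj]] : exists j, p = (6 * j + 1)%N \/ p = (6 * j + 5)%N.
    by exists (p %/ 6)%N; move: n2 n3; lia.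
    exists j; rewrite {1}pj U6j U1 (_ : (p - 2 = 6 * j.-1 + 5)%N); last by lia.
    rewrite U6j U5 mulr0 mulr0 subr0 (_ : h.+1 = (3 * j).+1); last by lia.
    by rewrite m27 exprMn -exprM mulnC exprS mulrCA mulrC.
  exists j.+1; rewrite {1}pj U6j U5 (_ : (p - 2 = 6 * j + 3)%N); last by lia.
  rewrite U6j U3 mulr0 sub0r (_ : h.+1 = (3 * j.+1)%N); last by lia.
  rewrite exprM m27 exprMn !exprS.
  move: ((3:rat) ^+ 3 ^+ j) ((-1:rat) ^+ j) => A B; rewrite expr0; ring.
have hUX := UX (p - 2).
rewrite (_ : (p - 2).+2 = p) in hUX; last by lia.
rewrite He in hUX.
set s : rat := (-1) ^+ e in hUX.
have [ps phs] := phisX hp e.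
set sF : 'F_p := (-1) ^+ e in phs.
have s01 : (s = 1 /\ sF = 1) \/ (s = -1 /\ sF = -1).
  rewrite /s /sF -!(signr_odd _ e); case: (odd e); [right|left]; by rewrite ?expr1 ?expr0.
have p0 : (p%:R : rat) != 0 by rewrite pnatr_eq0; case: (p) hp3.
have pXE : X p = (s * 3 ^+ h.+1 - 3 ^+ p) / p%:R.
  by rewrite hUX; field.
have e3p : (3:rat) ^+ p = 3 * (3 ^+ h) ^+ 2 by rewrite {1}ph exprS -mul2n mulnC exprM.
have hR : (3 ^+ (p - 1) - 1) / p%:R = - X p * (3 ^+ h + s) * (1%:R / (3 ^ h.+1)%:R).
  rewrite pXE e3p natrX exprS (_ : (p - 1 = h * 2)%N); last by lia.
  rewrite exprM.
  have a0 : (3:rat) ^+ h != 0 by rewrite expf_neq0.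
  move: ((3:rat) ^+ h) a0 => a a0.
  by case: s01 => -[-> _]; field; rewrite a0 p0.
have pk : forall k, (0 < k < p)%N -> ~~ (p %| k)%N.
  by move=> k /andP[k0 kp]; apply/negP => /(dvdn_leq k0); rewrite leqNgt kp.
have p3k : forall n : nat, ~~ (p %| 3 ^ n)%N.
  move=> n; by rewrite Euclid_dvdX // negb_and p3.
have [pX phX] : pint p (X p) /\ phi p (X p) =
    \sum_(1 <= k < p) ((-1) ^+ k * ('C(p.-1 - k, k.-1)%:R / k%:R) * 3 ^+ (p - k) : 'F_p).
  apply: (phiS' hp) => k; rewrite mem_index_iota => hk.
  have [a1 a2] := phisX hp k.
  have [b1 b2] := phi_div hp 'C(p.-1 - k, k.-1) (pk k hk).
  have [c1 c2] := phi3X hp (p - k).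
  have [d1 d2] := phiM hp a1 b1.
  have [e1 e2] := phiM hp d1 c1.
  by split=> //; rewrite e2 d2 a2 b2 c2.
have [pL phL] : pint p (\sum_(1 <= k < p) ('C(2 * k, k))%:R / (k%:R * 3%:R ^+ k) : rat) /\
    phi p (\sum_(1 <= k < p) ('C(2 * k, k))%:R / (k%:R * 3%:R ^+ k) : rat) =
    \sum_(1 <= k < p) ('C(2 * k, k)%:R / (k * 3 ^ k)%:R : 'F_p).
  apply: (phiS' hp) => k; rewrite mem_index_iota => hk.
  rewrite -natrX -natrM; apply: (phi_div hp).
  by rewrite Euclid_dvdM // negb_or pk // p3k.
have [q1 q2] := phi3X hp h.
have [r1 r2] := phiD hp q1 ps.
have [u1 u2] := phi_div hp 1 (p3k h.+1).
have [v1 v2] := phiN pX.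
have [w1 w2] := phiM hp v1 r1.
have [x1 x2] := phiM hp w1 u1.
have F3 : (3 : 'F_p) != 0 by rewrite natF0.
have key : (3 : 'F_p) ^+ h = sF.
  have [k1 k2] := phiM hp ps (proj1 (phi3X hp h.+1)).
  have [k3 k4] := phiN (proj1 (phi3X hp p)).
  have [k5 k6] := phiD hp k1 k3.
  have [k7 k8] := phiM hp (proj1 (phin hp p)) pX.
  have := congr1 (phi p) hUX.
  rewrite k6 k2 k4 phs (proj2 (phi3X hp h.+1)) (proj2 (phi3X hp p)) k8 (proj2 (phin hp p)).
  have e3F : (3 : 'F_p) ^+ p = 3 * (3 ^+ h) ^+ 2.
    by have := expr_odd2 (3 : 'F_p) h; rewrite -ph.
  rewrite pchar_Fp_0 // mul0r e3F exprS => /eqP.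
  rewrite subr_eq0 mulrCA (inj_eq (mulfI F3)) => /eqP E.
  have a0 : (3 : 'F_p) ^+ h != 0 by rewrite expf_neq0.
  by apply: (mulIf a0); rewrite -expr2 E.
rewrite hR; apply: (phi_congr hp pL x1).
rewrite phL x2 w2 v2 r2 u2 phX q2 phs key natrX exprS key.
rewrite -mulrA mulNr mulr_suml -sumrN.
apply: eq_big_nat => k hk.
case/andP: hk => k0 kp.
rewrite (binF hp (a := k) (b := k.-1)) //; last by rewrite (leq_ltn_trans (leq_pred k)).
have hb : ('C(2 * k, k) = 2 * 'C(k + k.-1, k.-1))%N.
  clear -k0; case: k k0 => // k _ /=.
  have := mul_bin_diag (2 * k.+1) k.
  rewrite (_ : (2 * k.+1).-1 = k.+1 + k)%N; last by lia.
  move=> E; apply/eqP; rewrite -(eqn_pmul2l (ltn0Sn k)) -E.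
  by rewrite mulnCA mulnA.
have sF2 : sF * sF = 1 by case: s01 => -[_ ->]; rewrite ?mulrNN mulr1.
have e3F : (3 : 'F_p) ^+ p = 3 * (3 ^+ h) ^+ 2.
  by have := expr_odd2 (3 : 'F_p) h; rewrite -ph.
have T0 : (3 : 'F_p) ^+ k != 0 by rewrite expf_neq0.
have t3 : (3 : 'F_p) ^+ (p - k) = 3 / 3 ^+ k.
  apply: (mulIf T0); rewrite divfK // -exprD subnK; last exact: ltnW.
  by rewrite e3F key expr2 sF2 mulr1.
have sg : ((-1) ^+ k : 'F_p) = - (-1) ^+ k.-1.
  by clear -k0; case: k k0 => // k _; rewrite exprS mulN1r.
have K0 : (k%:R : 'F_p) != 0 by rewrite natF0 //; apply: pk; rewrite k0 kp.
have sg2 : ((-1) ^+ k.-1 : 'F_p) = 1 \/ ((-1) ^+ k.-1 : 'F_p) = -1.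
  rewrite -signr_odd; case: (odd _); [right|left]; by rewrite ?expr1 ?expr0.
have s2 : sF = 1 \/ sF = -1 by case: s01 => -[_ ->]; [left|right].
have F2 : (2 : 'F_p) != 0.
  by rewrite natF0 // dvdn_prime2 //; apply/eqP => e2; rewrite e2 in hp3.
rewrite hb natrM natrM natrX t3 sg.
move: ((3 : 'F_p) ^+ k) T0 => T T0.
move: ('C(k + k.-1, k.-1)%:R : 'F_p) => c.
by case: sg2 => ->; case: s2 => ->; field; rewrite ?oppr_eq0 F3 T0 K0.
Qed.
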